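(* If $n$ is a non-negative integer and $p$ is a positive integer, then $$\sum_{k = 1}^n \sum_{j = 0}^{k - 1} \frac{1}{(k - j)(n - j + p)} = \frac{1}{2}\left( H_n^2 - H_n^{(2)} \right) - \frac{1}{2}\left( H_{p - 1}^2 + H_{p - 1}^{(2)} \right) + H_{p - 1} \left( H_{p + n - 1} - H_n \right) + H_n \left( H_{p + n} - H_n \right) - \sum_{k = 1}^{p - 1} \frac{H_{k - 1}}{n + k}.$$ In particular, $$\sum_{k = 1}^n \sum_{j = 0}^{k - 1} \frac{1}{(k - j)(n + 1 - j)} = \frac{1}{2}\left( H_n^2 - H_n^{(2)} \right) + \frac{H_n}{n + 1}.$$
   Context: $H_n=\sum_{m=1}^n\frac1m$ and $H_n^{(2)}=\sum_{m=1}^n\frac1{m^2}$ (with $H_0=H_0^{(2)}=0$). Empty sums are zero. *)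

(* Defs.v *)
From mathcomp Require Import all_boot all_order all_algebra.
Set Implicit Arguments. Unset Strict Implicit. Unset Printing Implicit Defensive.
Import Order.TTheory GRing.Theory Num.Theory.
Local Open Scope ring_scope.

Definition harm (R : fieldType) (n : nat) : R :=
  \sum_(1 <= m < n.+1) (m%:R)^-1.

Definition harm2 (R : fieldType) (n : nat) : R :=
  \sum_(1 <= m < n.+1) ((m%:R) ^+ 2)^-1.

(* Main.v *)
Require Import Defs.
From mathcomp Require Import all_boot all_order all_algebra.
From mathcomp Require Import ring lra zify.
Import Order.TTheory GRing.Theory Num.Theory.
Local Open Scope ring_scope.

Ltac nz := repeat (apply/andP; split); apply/negbT; apply: gt_eqF; lra.

Lemma harm0 (R : realFieldType) : harm R 0 = 0.
Proof. by rewrite /harm big_geq. Qed.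
Lemma harm2_0 (R : realFieldType) : harm2 R 0 = 0.
Proof. by rewrite /harm2 big_geq. Qed.
Lemma harmS (R : realFieldType) n : harm R n.+1 = harm R n + (n.+1%:R)^-1.
Proof. by rewrite /harm big_nat_recr. Qed.
Lemma harm2S (R : realFieldType) n : harm2 R n.+1 = harm2 R n + ((n.+1%:R)^+2)^-1.
Proof. by rewrite /harm2 big_nat_recr. Qed.

Lemma swap (R : realFieldType) (F : nat -> R) n :
  \sum_(1 <= k < n.+1) \sum_(0 <= j < k) ((k - j)%:R^-1 * F j)
  = \sum_(0 <= j < n) harm R (n - j) * F j.
Proof.
elim: n => [|n IH]; first by rewrite !big_geq.
rewrite big_nat_recr //= IH.
rewrite [in RHS](eq_big_nat _ _ (F2 := fun j => harm R (n-j) * F j + ((n.+1-j)%:R^-1 * F j))); last first.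
  by move=> j /andP[_ hj]; rewrite subSn // harmS mulrDl.
by rewrite big_split /= [X in _ = X + _]big_nat_recr //= subnn harm0 mul0r addr0.
Qed.

Lemma rev_sum (R : realFieldType) n p :
  \sum_(0 <= j < n) harm R (n - j) * ((n - j + p)%:R)^-1
  = \sum_(0 <= i < n) harm R i.+1 * ((i.+1 + p)%:R)^-1.
Proof.
rewrite big_nat_rev /=. apply: eq_big_nat => i /andP[_ hi].
by have -> : (n - (0 + n - i.+1))%N = i.+1 by lia.
Qed.

Lemma L5 (R : realFieldType) m :
  \sum_(1 <= k < m.+1) harm R k.-1 / k%:R = 2^-1 * (harm R m ^+ 2 - harm2 R m).
Proof.
elim: m => [|m IH].
  by rewrite big_geq // harm0 harm2_0 expr0n /= subrr mulr0.
rewrite big_nat_recr //= IH harmS harm2S.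
have := ler0n R m => ?. field; nz.
Qed.

Definition G (R : realFieldType) n p : R :=
  2^-1 * (harm R n ^+ 2 - harm2 R n)
     - 2^-1 * (harm R p.-1 ^+ 2 + harm2 R p.-1)
     + harm R p.-1 * (harm R (p + n).-1 - harm R n)
     + harm R n * (harm R (p + n) - harm R n)
     - \sum_(1 <= k < p) (harm R k.-1 / (n + k)%:R).

Lemma Gstep (R : realFieldType) q n :
  G R n.+1 q.+1 = G R n q.+1 + harm R n.+1 / (n.+1 + q.+1)%:R.
Proof.
have := ler0n R n; have := ler0n R q => h1 h2.
elim: q h1 => [|q IH] h1.
  rewrite /G /= !big_geq // harm0 harm2_0 !add1n /= !harmS !harm2S.
  field; nz.
have := ler0n R q => h3.
apply/eqP; rewrite -subr_eq0.
set A := G R n.+1 q.+1. set B := G R n q.+1 + harm R n.+1 / (n.+1 + q.+1)%:R.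
have -> : G R n.+1 q.+2 - (G R n q.+2 + harm R n.+1 / (n.+1 + q.+2)%:R) = A - B.
  rewrite /A /B /G /= (@big_nat_recr _ _ _ q.+1) // (@big_nat_recr _ _ _ q.+1) //=.
  rewrite !addSn !addnS /= !harmS !harm2S.
  field; nz.
by rewrite /A /B IH // subrr.
Qed.

Lemma TG (R : realFieldType) n q :
  \sum_(0 <= i < n) harm R i.+1 * ((i.+1 + q.+1)%:R)^-1 = G R n q.+1.
Proof.
elim: n => [|n IH].
  rewrite big_geq // /G /=.
  under eq_bigr => k _ do rewrite add0n.
  rewrite L5 addn0 harm0 harm2_0.
  field.
  by [].
by rewrite big_nat_recr //= IH Gstep.
Qed.

Theorem proposition11 (R : realFieldType) (n p : nat) (hp : (0 < p)%N) :
  (\sum_(1 <= k < n.+1) \sum_(0 <= j < k)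
      (((k - j)%:R * (n - j + p)%:R)^-1 : R)
   = 2^-1 * (harm R n ^+ 2 - harm2 R n)
     - 2^-1 * (harm R p.-1 ^+ 2 + harm2 R p.-1)
     + harm R p.-1 * (harm R (p + n).-1 - harm R n)
     + harm R n * (harm R (p + n) - harm R n)
     - \sum_(1 <= k < p) (harm R k.-1 / (n + k)%:R))
  /\
  (\sum_(1 <= k < n.+1) \sum_(0 <= j < k)
      (((k - j)%:R * (n.+1 - j)%:R)^-1 : R)
   = 2^-1 * (harm R n ^+ 2 - harm2 R n) + harm R n / (n.+1)%:R).
Proof.
have main : forall q, \sum_(1 <= k < n.+1) \sum_(0 <= j < k)
      (((k - j)%:R * (n - j + q.+1)%:R)^-1 : R) = G R n q.+1.
  move=> q.
  under eq_bigr => k _ do under eq_bigr => j _ do rewrite invfM.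
  rewrite (swap R (fun j => ((n - j + q.+1)%:R)^-1)) rev_sum.
  exact: TG.
split.
  case: p hp => [//|q] _. exact: main.
rewrite (eq_big_nat _ _ (F2 := fun k => \sum_(0 <= j < k)
      (((k - j)%:R * (n - j + 1)%:R)^-1 : R))); last first.
  move=> k /andP[_ hk]; apply: eq_big_nat => j /andP[_ hj].
  by have -> : (n.+1 - j = n - j + 1)%N by lia.
rewrite main /G /= big_geq // harm0 harm2_0 !add1n /= harmS.
have := ler0n R n => ?. field; nz.
Qed.
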